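(* (1) Every nonempty compact metric space $X$ admits a peripheral extension. (2) Any two peripheral extensions of a nonempty compact metric space $X$ are homeomorphic via a homeomorphism that is the identity on $X$. (3) Given a peripheral extension $K$ of $X$, the group of homeomorphisms of $K$ that are the identity on $X$ acts transitively on the set $P$ of peripheral points of $K$.
   Context: Let $P$ be a countably infinite discrete space. A peripheral extension of a compact metric space $X$ is a compact metric space $K$ containing $P$ as an open dense subspace such that $K\setminus P$ is homeomorphic to $X$ (identified with $X$); the points of $P$ are the peripheral points. *)

(* Defs.v *)
From HB Require Import structures.
From mathcomp Require Import all_boot all_order all_algebra.
From mathcomp Require Import all_classical all_reals all_analysis.
Set Implicit Arguments. Unset Strict Implicit. Unset Printing Implicit Defensive.
Import Order.TTheory GRing.Theory Num.Theory.
Local Open Scope classical_set_scope.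

Definition homeomorphism {S T : topologicalType} (h : S -> T) : Prop :=
  continuous h /\ exists g : T -> S, cancel h g /\ cancel g h /\ continuous g.

Definition embedding {S T : topologicalType} (e : S -> T) : Prop :=
  continuous e /\ injective e /\
  forall U : set S, open U -> exists V : set T, open V /\ e @` U = V `&` range e.

Definition peripheral_extension {R : realType} (X K : metricType R) (e : X -> K) : Prop :=
  let P := ~` range e in
  compact [set: K] /\ embedding e /\ open P /\ closure P = [set: K] /\
  countable P /\ infinite_set P /\ (forall p, P p -> isolated P p).

(* Main.v *)
Require Import Defs.
From HB Require Import structures.
From mathcomp Require Import all_boot all_order all_algebra.
From mathcomp Require Import all_classical all_reals all_analysis.
From mathcomp Require Import lra zify.
From Stdlib Require Import Lia.
Local Open Scope classical_set_scope.

Module Aux.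
Set Implicit Arguments. Unset Strict Implicit. Unset Printing Implicit Defensive.
Import Order.TTheory GRing.Theory Num.Theory.
Import numFieldNormedType.Exports.
Local Open Scope classical_set_scope.
Local Open Scope ring_scope.

Section helpers.
Context {R : realType}.

Lemma nbhs_md (V : metricType R) (x : V) (A : set V) :
  nbhs x A <-> exists2 e : R, 0 < e & forall y, mdist x y < e -> A y.
Proof.
rewrite -metricType_numDomainType.filter_from_mdist_nbhs.
split; by move=> [e e0 H]; exists e.
Qed.

Lemma cont_md (V W : metricType R) (f : V -> W) :
  (forall x (e : R), 0 < e -> exists2 d : R, 0 < d &
     forall y, mdist x y < d -> mdist (f x) (f y) < e) -> continuous f.
Proof.
move=> H x A /= /nbhs_md [e e0 HA]; apply/nbhs_md.
have [d d0 Hd] := H x e e0; exists d => // y /Hd; exact: HA.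
Qed.

Lemma md_cont (V W : metricType R) (f : V -> W) : continuous f ->
  (forall x (e : R), 0 < e -> exists2 d : R, 0 < d &
     forall y, mdist x y < d -> mdist (f x) (f y) < e).
Proof.
move=> H x e e0.
have : nbhs (f x) [set z | mdist (f x) z < e] by apply/nbhs_md; exists e.
move=> /H /nbhs_md [d d0 Hd]; exists d => //.
Qed.

Lemma open_md (V : metricType R) (A : set V) :
  open A <-> forall x, A x -> exists2 e : R, 0 < e & forall y, mdist x y < e -> A y.
Proof.
rewrite openE; split => H x Ax.
  by have := H x Ax; rewrite /interior => /nbhs_md.
by rewrite /interior; apply/nbhs_md; apply: H.
Qed.

Lemma mdC (V : metricType R) (x y : V) : mdist x y = mdist y x.
Proof. exact: metric_sym. Qed.

Lemma periph_isol (X K : metricType R) (e : X -> K) : peripheral_extension e ->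
  forall p, ~ range e p -> exists2 r : R, 0 < r & forall y, mdist p y < r -> y = p.
Proof.
move=> [_ [_ [oP [_ [_ [_ iso]]]]]] p Pp.
have [e1 e10 H1] := (proj1 (open_md _) oP) p Pp.
have [_ [V /nbhs_md [e2 e20 H2] HV]] := iso p Pp.
exists (Num.min e1 e2); first by rewrite lt_min e10 e20.
move=> y; rewrite lt_min => /andP [y1 y2].
have : (V `&` ~` range e) y by split; [apply: H2 | apply: H1].
by rewrite HV.
Qed.

End helpers.

Section P3.
Context {R : realType}.



Definition swap (K : metricType R) (p q : K) (y : K) :=
  if y == p then q else if y == q then p else y.

Lemma swapK (K : metricType R) (p q : K) : cancel (swap p q) (swap p q).
Proof.
move=> y; rewrite /swap.
case: (eqVneq y p) => [->|yp].
  by rewrite eqxx; case: (eqVneq q p) => [->|qp]; rewrite ?eqxx.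
case: (eqVneq y q) => [->|yq]; first by rewrite eqxx.
by rewrite (negbTE yp) (negbTE yq).
Qed.

Lemma swap_cont (K : metricType R) (p q : K) (rp rq : R) :
  0 < rp -> 0 < rq -> (forall y, mdist p y < rp -> y = p) ->
  (forall y, mdist q y < rq -> y = q) -> continuous (swap p q).
Proof.
move=> rp0 rq0 Hp Hq; apply: cont_md => x eps eps0.
case: (eqVneq x p) => [->|xp].
  exists rp => // y /Hp ->; by rewrite mdistxx.
case: (eqVneq x q) => [->|xq].
  exists rq => // y /Hq ->; by rewrite mdistxx.
exists (Num.min eps (Num.min (mdist x p) (mdist x q))).
  by rewrite !lt_min eps0 !mdist_gt0 xp xq.
move=> y; rewrite !lt_min => /andP [ye /andP [yp yq]].
have yp' : y != p by apply/eqP => E; move: yp; rewrite E ltxx.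
have yq' : y != q by apply/eqP => E; move: yq; rewrite E ltxx.
by rewrite /swap (negbTE xp) (negbTE xq) (negbTE yp') (negbTE yq').
Qed.

Lemma part3 (X K : metricType R) (e : X -> K) : peripheral_extension e ->
      forall p q : K, ~ range e p -> ~ range e q ->
      exists h : K -> K, [/\ homeomorphism h, forall x, h (e x) = e x & h p = q].
Proof.
move=> pe p q Pp Pq.
have [rp rp0 Hp] := periph_isol pe Pp.
have [rq rq0 Hq] := periph_isol pe Pq.
have hc := swap_cont rp0 rq0 Hp Hq.
exists (swap p q); split.
- split => //; exists (swap p q); split; [exact: swapK|split; [exact: swapK|exact: hc]].
- move=> x; rewrite /swap.
  have -> : (e x == p) = false by apply/negbTE/eqP => E; apply: Pp; exists x.
  have -> : (e x == q) = false by apply/negbTE/eqP => E; apply: Pq; exists x.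
  by [].
- by rewrite /swap eqxx.
Qed.
End P3.

Definition pt_of (T : topologicalType) (x : T) : Type := T.
HB.instance Definition _ (T : topologicalType) (x : T) := Topological.on (pt_of x).
HB.instance Definition _ (T : topologicalType) (x : T) := isPointed.Build (pt_of x) x.
Lemma compact_cover_np (T : topologicalType) (x : T) (A : set T) : compact A -> cover_compact A.
Proof.
move=> cA; have : @compact (pt_of x) A by [].
by rewrite compact_cover.
Qed.

Section Ext.
Context {R : realType}.

Lemma cont_R (V : metricType R) (f : V -> R) :
  (forall x (eps : R), 0 < eps -> exists2 d : R, 0 < d &
     forall y, mdist x y < d -> `|f x - f y| < eps) -> continuous f.
Proof.
move=> H x; apply/cvgrPdist_lt => eps eps0.
have [d d0 Hd] := H x eps eps0.
by apply/nbhs_md; exists d.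
Qed.

Lemma far_seq (V : metricType R) (x : V) (s : seq V) : x \notin s ->
  exists2 r : R, 0 < r & forall y, mdist x y < r -> y \notin s.
Proof.
elim: s => [|a s IH] /=; first by move=> _; exists 1 => //.
rewrite in_cons negb_or => /andP [xa /IH [r r0 Hr]].
exists (Num.min r (mdist x a)); first by rewrite lt_min r0 mdist_gt0.
move=> y; rewrite lt_min => /andP [yr ya]; rewrite in_cons negb_or Hr // andbT.
by apply/eqP => E; move: ya; rewrite E ltxx.
Qed.

Lemma ball_md_open (V : metricType R) (x : V) (a : R) : open [set z | mdist x z < a].
Proof.
apply/open_md => z /= xz; exists (a - mdist x z); first by rewrite subr_gt0.
move=> w zw; have := metric_triangle x z w; lra.
Qed.

Variables (X K : metricType R) (e : X -> K).
Hypothesis pe : peripheral_extension e.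

Lemma pe_cont : continuous e.
Proof. by case: pe => _ [[]]. Qed.

Lemma pe_inj : injective e.
Proof. by case: pe => _ [[_ []]]. Qed.

Lemma pe_einv x (a : R) : 0 < a -> exists2 b : R, 0 < b &
  forall z, mdist (e x) (e z) < b -> mdist x z < a.
Proof.
move=> a0; case: pe => _ [[_ [einj Hemb]] _].
have [V [oV HV]] := Hemb _ (ball_md_open x a).
have Vx : V (e x).
  have : (e @` [set z | mdist x z < a]) (e x) by exists x => //=; rewrite mdistxx.
  by rewrite HV => -[].
have [b b0 Hb] := (proj1 (open_md _) oV) _ Vx.
exists b => // z /Hb Vz.
have : (V `&` range e) (e z) by split => //; exists z.
by rewrite -HV => -[u /= ua /einj <-].
Qed.

Lemma pe_retr : [set: X] !=set0 -> compact [set: X] ->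
  exists r : K -> X, forall p z, mdist p (e (r p)) <= mdist p (e z).
Proof.
move=> X0 cX.
suff H : forall p, exists c, forall z, mdist p (e c) <= mdist p (e z).
  by have [r Hr] := choice H; exists r.
move=> p.
have fc : continuous (fun z => mdist p (e z)).
  apply: cont_R => x eps eps0.
  have [d d0 Hd] := md_cont pe_cont x eps0.
  exists d => // y /Hd H1.
  have := metric_triangle p (e x) (e y); have := metric_triangle p (e y) (e x).
  rewrite (mdC (e y) (e x)) => h1 h2.
  apply: le_lt_trans H1; rewrite ler_norml; apply/andP; split; lra.
have [c _ Hc] := compact_EVT_min X0 cX (continuous_subspaceT fc).
by exists c => z; apply: Hc; rewrite inE.
Qed.

Lemma pe_open1 p : ~ range e p -> open [set p].
Proof.
move=> /(periph_isol pe) [r r0 Hr]; apply/open_md => q /= -> {q}.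
by exists r.
Qed.

Lemma pe_fin (gam : R) : 0 < gam ->
  finite_set [set y | forall z, gam <= mdist y (e z)].
Proof.
move=> g0; set C := [set y | _].
have CP : C `<=` ~` range e.
  move=> y Cy [z _ yz]; have := Cy z; rewrite yz mdistxx; lra.
have cC : compact C.
  apply: (@subclosed_compact _ _ [set: K]) => //; last by case: pe.
  rewrite -openC; apply/open_md => y /= /existsNP [z /negP]; rewrite -ltNge => yz.
  exists (gam - mdist y (e z)); first by rewrite subr_gt0.
  move=> w yw Cw; have := Cw z; have := metric_triangle w y (e z).
  rewrite (mdC w y); lra.
have [[y0 Cy0]|C0] := pselect (C !=set0); last first.
  by have -> : C = set0 by apply/eqP; apply/negPn/negP => /set0P. 
move: (compact_cover_np y0 cC) => /(_ K C (fun i => [set i])).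
case.
- by move=> i /CP /pe_open1.
- by move=> y Cy; exists y.
move=> D' _ HD; apply: (finite_subfset D') => y /HD [i /= iD ->]; exact: iD.
Qed.

Lemma pe_dense x (eps : R) (s : seq K) : 0 < eps -> e x \notin s ->
  exists q, [/\ ~ range e q, q \notin s & mdist (e x) q < eps].
Proof.
move=> eps0 /far_seq [r r0 Hr].
case: pe => _ [_ [_ [cP _]]].
have : closure (~` range e) (e x) by rewrite cP.
move=> /(_ [set q | mdist (e x) q < Num.min eps r]) [].
  by apply/nbhs_md; exists (Num.min eps r) => //; rewrite lt_min eps0 r0.
move=> q [Pq]; rewrite /= lt_min => /andP [qe qr].
by exists q; split => //; apply: Hr.
Qed.

End Ext.

Section BFabs.
Variables (A B : eqType) (PA : set A) (PB : set B) (G : A -> B -> Prop).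
Variables (enA : nat -> A) (enB : nat -> B).
Hypothesis enAP : forall a, PA a -> exists n, enA n = a.
Hypothesis enBP : forall b, PB b -> exists n, enB n = b.
Hypothesis forth : forall a (s : seq B), PA a -> exists b, [/\ PB b, b \notin s & G a b].
Hypothesis back : forall b (s : seq A), PB b -> exists a, [/\ PA a, a \notin s & G a b].

Lemma uniq_fst_fun (s : seq (A * B)) a b b' : uniq (map fst s) ->
  (a, b) \in s -> (a, b') \in s -> b = b'.
Proof.
elim: s => [|[x y] s IH] //=; rewrite !in_cons => /andP [xs us].
case/orP => [/eqP [E1 E2]|H1]; case/orP => [/eqP [E3 E4]|H2].
- by rewrite E2 E4.
- by move: xs => /negP []; apply/mapP; exists (a, b') => //; rewrite E1.
- by move: xs => /negP []; apply/mapP; exists (a, b) => //; rewrite E3.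
- exact: IH.
Qed.

Lemma uniq_snd_fun (s : seq (A * B)) a a' b : uniq (map snd s) ->
  (a, b) \in s -> (a', b) \in s -> a = a'.
Proof.
elim: s => [|[x y] s IH] //=; rewrite !in_cons => /andP [xs us].
case/orP => [/eqP [E1 E2]|H1]; case/orP => [/eqP [E3 E4]|H2].
- by rewrite E1 E3.
- by move: xs => /negP []; apply/mapP; exists (a', b) => //; rewrite E2.
- by move: xs => /negP []; apply/mapP; exists (a, b) => //; rewrite E4.
- exact: IH.
Qed.

Lemma bf_exists : exists (f : A -> B) (g : B -> A),
  (forall a, PA a -> [/\ PB (f a), g (f a) = a & G a (f a)]) /\
  (forall b, PB b -> [/\ PA (g b), f (g b) = b & G (g b) b]).
Proof.
have /choice [fo Hfo] : forall x : A * seq B, exists b, PA x.1 ->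
   [/\ PB b, b \notin x.2 & G x.1 b].
  move=> [a s] /=; have [Pa|nPa] := pselect (PA a).
    by have [b Hb] := forth s Pa; exists b.
  by exists (enB 0).
have /choice [ba Hba] : forall x : B * seq A, exists a, PB x.1 ->
   [/\ PA a, a \notin x.2 & G a x.1].
  move=> [b s] /=; have [Pb|nPb] := pselect (PB b).
    by have [a Ha] := back s Pb; exists a.
  by exists (enA 0).
pose step n (s : seq (A * B)) :=
  let s1 := if `[< PA (enA n) >] && (enA n \notin map fst s)
            then (enA n, fo (enA n, map snd s)) :: s else s in
  if `[< PB (enB n) >] && (enB n \notin map snd s1)
  then (ba (enB n, map fst s1), enB n) :: s1 else s1.
pose Inv (s : seq (A * B)) := [/\ uniq (map fst s), uniq (map snd s) &
   forall a b, (a, b) \in s -> [/\ PA a, PB b & G a b]].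
have stepInv n s : Inv s -> Inv (step n s).
  move=> [u1 u2 Hs]; rewrite /step.
  set s1 := (if `[< PA (enA n) >] && _ then _ else _).
  have I1 : Inv s1.
    rewrite /s1; case: ifP => [/andP [/asboolP Pa na]|_]; last by split.
    have [Pb nb Gab] := Hfo (enA n, map snd s) Pa.
    split => /=; [by rewrite na|by rewrite nb|].
    move=> a b; rewrite in_cons => /orP [/eqP [-> ->]|]; first by [].
    exact: Hs.
  case: ifP => [/andP [/asboolP Pb nb]|_]; last by [].
  case: I1 => [v1 v2 Hs1].
  have [Pa na Gab] := Hba (enB n, map fst s1) Pb.
  split => /=; [by rewrite na|by rewrite nb|].
  move=> a b; rewrite in_cons => /orP [/eqP [-> ->]|]; first by [].
  exact: Hs1.
have stepSub n s : {subset s <= step n s}.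
  move=> x xs; rewrite /step.
  set s1 := (if `[< PA (enA n) >] && _ then _ else _).
  have xs1 : x \in s1 by rewrite /s1; case: ifP => _ //; rewrite in_cons xs orbT.
  by case: ifP => _ //; rewrite in_cons xs1 orbT.
have stepA n s : PA (enA n) -> enA n \in map fst (step n s).
  move=> Pa; rewrite /step.
  set s1 := (if `[< PA (enA n) >] && _ then _ else _).
  have xs1 : enA n \in map fst s1.
    rewrite /s1; case: ifP => [_|]; first by rewrite /= in_cons eqxx.
    by move/negbT; rewrite negb_and => /orP [/asboolPn //|]; rewrite negbK.
  by case: ifP => _ //=; rewrite in_cons xs1 orbT.
have stepB n s : PB (enB n) -> enB n \in map snd (step n s).
  move=> Pb; rewrite /step.
  set s1 := (if `[< PA (enA n) >] && _ then _ else _).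
  case: ifP => [_|]; first by rewrite /= in_cons eqxx.
  by move/negbT; rewrite negb_and => /orP [/asboolPn //|]; rewrite negbK.
pose S := fix S n := if n is m.+1 then step m (S m) else [::].
have SInv n : Inv (S n).
  by elim: n => [|n IH] /=; [split|apply: stepInv].
have Smono n m : (n <= m)%N -> {subset S n <= S m}.
  move=> /subnK <-; elim: (m - n)%N => [|k IH] //= x /IH.
  by rewrite ?addSn; apply: stepSub.
pose Rel a b := exists n, (a, b) \in S n.
have RelG a b : Rel a b -> [/\ PA a, PB b & G a b].
  by move=> [n abn]; case: (SInv n) => _ _ /(_ _ _ abn).
have Rfun a b b' : Rel a b -> Rel a b' -> b = b'.
  move=> [n H1] [m H2]; case: (SInv (maxn n m)) => u1 _ _.
  by apply: (uniq_fst_fun u1); apply: Smono H1 || apply: Smono H2;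
    rewrite ?leq_maxl ?leq_maxr.
have Rinj a a' b : Rel a b -> Rel a' b -> a = a'.
  move=> [n H1] [m H2]; case: (SInv (maxn n m)) => _ u2 _.
  by apply: (uniq_snd_fun u2); apply: Smono H1 || apply: Smono H2;
    rewrite ?leq_maxl ?leq_maxr.
have RA a : PA a -> exists b, Rel a b.
  move=> /[dup] Pa /enAP [n En].
  have := stepA n (S n); rewrite En => /(_ Pa) /mapP [[x b] xin /= ->].
  by exists b, n.+1.
have RB b : PB b -> exists a, Rel a b.
  move=> /[dup] Pb /enBP [n En].
  have := stepB n (S n); rewrite En => /(_ Pb) /mapP [[a y] xin /= ->].
  by exists a, n.+1.
have /choice [f Hf] : forall a, exists b, PA a -> Rel a b.
  move=> a; have [Pa|nPa] := pselect (PA a).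
    by have [b Hb] := RA a Pa; exists b.
  by exists (enB 0).
have /choice [g Hg] : forall b, exists a, PB b -> Rel a b.
  move=> b; have [Pb|nPb] := pselect (PB b).
    by have [a Ha] := RB b Pb; exists a.
  by exists (enA 0).
exists f, g; split.
- move=> a Pa; have Ra := Hf a Pa; have [_ Pb Gab] := RelG _ _ Ra.
  split => //; have Rb := Hg _ Pb.
  by apply: Rinj Rb Ra.
- move=> b Pb; have Rb := Hg b Pb; have [Pa _ Gab] := RelG _ _ Rb.
  split => //; have Ra := Hf _ Pa.
  by apply: Rfun Ra Rb.
Qed.
End BFabs.

Section Good.
Context {R : realType}.
Variables (X K1 K2 : metricType R) (e1 : X -> K1) (e2 : X -> K2).
Hypotheses (pe1 : peripheral_extension e1) (pe2 : peripheral_extension e2).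
Variables (r1 : K1 -> X) (r2 : K2 -> X).
Hypothesis hr1 : forall p z, mdist p (e1 (r1 p)) <= mdist p (e1 z).
Hypothesis hr2 : forall p z, mdist p (e2 (r2 p)) <= mdist p (e2 z).

Definition good p q := mdist (r1 p) (r2 q) <
  Num.max (mdist p (e1 (r1 p))) (mdist q (e2 (r2 q))).

Lemma forth_lem p (s : seq K2) : ~ range e1 p ->
  exists q, [/\ ~ range e2 q, q \notin s & good p q].
Proof.
move=> Pp; set d := mdist p (e1 (r1 p)).
have d0 : 0 < d by rewrite mdist_gt0; apply/eqP => E; apply: Pp; exists (r1 p).
set x := r1 p.
have [b b0 Hb] := pe_einv pe2 x d0.
have m0 : 0 < Num.min d (b / 2) by rewrite lt_min d0 divr_gt0.
have xs : e2 x \notin seq.filter (predC1 (e2 x)) s by rewrite mem_filter /= eqxx.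
have [q [Pq qs xq]] := pe_dense pe2 m0 xs.
exists q; split => //.
  apply/negP => qs'; move: qs; rewrite mem_filter qs' andbT /= => /negP; apply.
  by apply/eqP => E; apply: Pq; exists x.
move: xq; rewrite lt_min => /andP [xq1 xq2].
have h1 := hr2 q x.
have h2 := metric_triangle (e2 x) q (e2 (r2 q)).
rewrite (mdC q (e2 x)) in h1.
have : mdist x (r2 q) < d by apply: Hb; lra.
move=> H; rewrite /good; apply: lt_le_trans H _; rewrite le_max lexx //.
Qed.

Lemma cont_lem (h : K1 -> K2) (g : K2 -> K1) :
  (forall x, h (e1 x) = e2 x) -> (forall y, ~ range e1 y -> good y (h y)) ->
  cancel h g -> continuous h.
Proof.
move=> He Hg hc; apply: cont_md => y0 eps eps0.
have [[x _ <-]|Py0] := pselect (range e1 y0); last first.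
  have [r r0 Hr] := periph_isol pe1 Py0.
  by exists r => // y /Hr ->; rewrite mdistxx.
rewrite He.
have eps20 : 0 < eps / 2 by rewrite divr_gt0.
have [a a0 Ha] := md_cont (pe_cont pe2) x eps20.
have a20 : 0 < a / 2 by rewrite divr_gt0.
have [b b0 Hb] := pe_einv pe1 x a20.
set gam := Num.min (eps / 2) (a / 2).
have gam0 : 0 < gam by rewrite lt_min eps20 a20.
have fC := pe_fin pe2 gam0.
set C2 := [set y | _] in fC.
have fD : finite_set [set y | ~ range e1 y /\ C2 (h y)].
  apply: (sub_finite_set _ (finite_image g fC)) => y [_ Cy].
  by exists (h y) => //; rewrite hc.
move: fD => /finite_seqP [s Ds].
have [n n0 Hn] : exists2 n : R, 0 < n & forall y, mdist (e1 x) y < n ->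
    ~ (~ range e1 y /\ C2 (h y)).
  have xs : e1 x \notin s.
    by apply/negP => xs; have : [set` s] (e1 x) by []; rewrite -Ds => -[[]]; exists x.
  have [n n0 Hn] := far_seq xs; exists n => // y /Hn ys ys'.
  have : [set` s] y by rewrite -Ds. 
  by move/negP: ys.
have b20 : 0 < b / 2 by rewrite divr_gt0.
exists (Num.min (b / 2) (Num.min n (a / 2))).
  by rewrite !lt_min b20 n0 a20.
move=> y; rewrite !lt_min => /andP [yb /andP [yn ya]].
have [[z _ Ez]|Py] := pselect (range e1 y).
  subst y.
  rewrite He.
  have H1 : mdist (e1 x) (e1 z) < b by lra.
  have H2 := Hb z H1.
  have H3 : mdist x z < a by lra.
  have := Ha z H3; lra.
have nC : ~ C2 (h y) by move=> Cy; exact: (Hn y yn).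
move: nC => /existsNP [z /negP]; rewrite -ltNge => hz.
have d2 := hr2 (h y) z.
have d1 := hr1 y x; rewrite (mdC y (e1 x)) in d1.
have t1 := metric_triangle (e1 x) y (e1 (r1 y)).
have xr1 : mdist x (r1 y) < a / 2 by apply: Hb; lra.
have gd := Hg y Py; rewrite /good in gd.
have gd' : mdist (r1 y) (r2 (h y)) < a / 2.
  apply: lt_le_trans gd _; rewrite ge_max; apply/andP; split.
    have : gam <= a / 2 by rewrite /gam ge_min lexx orbT.
    lra.
  have : gam <= a / 2 by rewrite /gam ge_min lexx orbT.
  lra.
have t2 := metric_triangle x (r1 y) (r2 (h y)).
have H3 := Ha (r2 (h y)) ltac:(lra).
have t3 := metric_triangle (e2 x) (e2 (r2 (h y))) (h y).
rewrite (mdC (e2 (r2 (h y))) (h y)) in t3.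
have : gam <= eps / 2 by rewrite /gam ge_min lexx.
lra.
Qed.

End Good.


Section Part2.
Context {R : realType}.

Lemma enum_P (K : metricType R) (P : set K) : countable P -> P !=set0 ->
  exists en : nat -> K, forall p, P p -> exists n, en n = p.
Proof.
move=> /countable_injP [f finj] [p0 Pp0].
have /choice [en Hen] : forall n : nat, exists p, (exists2 p', P p' & f p' = n) ->
    P p /\ f p = n.
  move=> n; have [[p' Pp' fp']|] := pselect (exists2 p', P p' & f p' = n).
    by exists p'.
  by move=> np; exists p0 => H; exfalso; exact: np H.
exists en => p Pp; exists (f p).
have [Pe fe] := Hen (f p) (ex_intro2 _ _ p Pp erefl).
by apply: finj => //; apply: mem_set.
Qed.

Lemma part2 (X : metricType R) (hX : compact [set: X]) : [set: X] !=set0 ->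
  forall (K1 K2 : metricType R) (e1 : X -> K1) (e2 : X -> K2),
      peripheral_extension e1 -> peripheral_extension e2 ->
      exists h : K1 -> K2, homeomorphism h /\ forall x, h (e1 x) = e2 x.
Proof.
move=> X0 K1 K2 e1 e2 pe1 pe2.
have [r1 hr1] := pe_retr pe1 X0 hX.
have [r2 hr2] := pe_retr pe2 X0 hX.
have Pne (K : metricType R) (e : X -> K) : peripheral_extension e ->
    (~` range e) !=set0.
  by move=> [_ [_ [_ [_ [_ [inf _]]]]]]; apply: infinite_setN0.
have [en1 Hen1] : exists en : nat -> K1, forall p, ~ range e1 p -> exists n, en n = p.
  by apply: enum_P; [case: pe1 => [_ [_ [_ [_ []]]]]|exact: Pne pe1].
have [en2 Hen2] : exists en : nat -> K2, forall p, ~ range e2 p -> exists n, en n = p.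
  by apply: enum_P; [case: pe2 => [_ [_ [_ [_ []]]]]|exact: Pne pe2].
have [f [g [Hf Hg]]] := @bf_exists K1 K2 (~` range e1) (~` range e2)
  (good e1 e2 r1 r2) en1 en2 Hen1 Hen2
  (fun a s Pa => forth_lem pe2 r1 hr2 s Pa)
  (fun b s Pb => ltac:(
     have [a [Pa ans gab]] := forth_lem pe1 r2 hr1 s Pb;
     exists a; split => //; rewrite /good mdC maxC; exact: gab)).
have /choice [h Hh] : forall y : K1, exists z : K2,
    (forall x, y = e1 x -> z = e2 x) /\ (~ range e1 y -> z = f y).
  move=> y; have [[x _ <-]|Py] := pselect (range e1 y).
    by exists (e2 x); split => // x' /(pe_inj pe1) ->.
  by exists (f y); split => // x yx; exfalso; apply: Py; exists x.
have /choice [k Hk] : forall y : K2, exists z : K1,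
    (forall x, y = e2 x -> z = e1 x) /\ (~ range e2 y -> z = g y).
  move=> y; have [[x _ <-]|Py] := pselect (range e2 y).
    by exists (e1 x); split => // x' /(pe_inj pe2) ->.
  by exists (g y); split => // x yx; exfalso; apply: Py; exists x.
have he x : h (e1 x) = e2 x by apply: (Hh _).1.
have ke x : k (e2 x) = e1 x by apply: (Hk _).1.
have hP y : ~ range e1 y -> h y = f y by apply: (Hh _).2.
have kP y : ~ range e2 y -> k y = g y by apply: (Hk _).2.
have hk : cancel h k.
  move=> y; have [[x _ <-]|Py] := pselect (range e1 y); first by rewrite he ke.
  have [Pfy gfy _] := Hf y Py.
  by rewrite hP // kP.
have kh : cancel k h.
  move=> y; have [[x _ <-]|Py] := pselect (range e2 y); first by rewrite ke he.
  have [Pgy fgy _] := Hg y Py.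
  by rewrite kP // hP.
exists h; split => //; split.
  apply: (cont_lem pe1 pe2 hr1 hr2 he _ hk) => y Py.
  by rewrite hP //; case: (Hf y Py).
exists k; split => //; split => //.
apply: (cont_lem pe2 pe1 hr2 hr1 ke _ kh) => y Py.
rewrite kP //; case: (Hg y Py) => _ _; rewrite /good mdC maxC; exact.
Qed.
End Part2.

Section Dense.
Context {R : realType}.

Lemma exists_N (eps : R) : 0 < eps -> exists N : nat, N.+1%:R^-1 < eps.
Proof.
move=> e0; exists (Num.bound eps^-1).
have ie0 : 0 <= eps^-1 by rewrite invr_ge0 ltW.
have h := archi_boundP ie0.
rewrite invf_plt ?posrE ?ltr0n //=.
by apply: lt_le_trans h _; rewrite ler_nat.
Qed.

Lemma dense_seq (X : metricType R) : compact [set: X] -> [set: X] !=set0 ->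
  exists y : nat -> X, forall x (eps : R), 0 < eps -> exists k, mdist x (y k) < eps.
Proof.
move=> cX [x0 _].
have /choice [s Hs] : forall N : nat, exists s : seq X, forall z,
    exists2 i, i \in s & mdist i z < N.+1%:R^-1.
  move=> N.
  have HC := compact_cover_np x0 cX.
  have := HC X [set: X] (fun i : X => [set z | mdist i z < N.+1%:R^-1]).
  case.
  - by move=> i _; apply: ball_md_open.
  - by move=> z _; exists z => //=; rewrite mdistxx invr_gt0 ltr0n.
  move=> D' _ HD; exists (finmap.enum_fset D') => z.
  by have [i /= iD zi] := HD z I; exists i.
pose y n := if choice.unpickle n is Some (N, j) then nth x0 (s N) j else x0.
exists y => x eps e0.
have [N HN] := exists_N e0.
have [i iS ix] := Hs N x.
exists (choice.pickle (N, index i (s N))).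
rewrite /y choice.pickleK nth_index // mdC.
exact: lt_trans HN.
Qed.
End Dense.

Definition KT {R : realType} (X : metricType R) (y : nat -> X) : Type :=
  (X + (nat * nat))%type.

HB.instance Definition _ {R : realType} (X : metricType R) (y : nat -> X) :=
  Choice.copy (KT y) (X + (nat * nat))%type.

Section KC.
Context {R : realType} (X : metricType R) (y : nat -> X).

Definition kbase (a : KT y) : X := match a with inl x => x | inr p => y p.1 end.
Definition kH (a : KT y) : R :=
  match a with inl _ => 0 | inr p => (p.1 + p.2).+1%:R^-1 end.
Definition kd (a b : KT y) : R :=
  if a == b then 0 else mdist (kbase a) (kbase b) + kH a + kH b.

Lemma kH_ge0 a : 0 <= kH a.
Proof. by case: a => [x|p] //=; rewrite invr_ge0 ler0n. Qed.

Lemma kH_gt0 p : 0 < kH (inr p).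
Proof. by rewrite /= invr_gt0 ltr0n. Qed.

Lemma kd_xx a : kd a a = 0.
Proof. by rewrite /kd eqxx. Qed.

Lemma kd_pos a b : kd a b = 0 -> a = b.
Proof.
rewrite /kd; case: (eqVneq a b) => [//|ab] H0.
have h1 := mdist_ge0 (kbase a) (kbase b).
have ha := kH_ge0 a; have hb := kH_ge0 b.
have m0 : mdist (kbase a) (kbase b) = 0 by lra.
have Ha : kH a = 0 by lra.
have Hb : kH b = 0 by lra.
clear H0 h1 ha hb; move: ab m0 Ha Hb.
case: a => [x|p]; case: b => [x'|p'] /= ab m0 Ha Hb.
- by move: ab; rewrite (mdist_positivity _ _ m0) eqxx.
- by have := kH_gt0 p'; rewrite /= Hb ltxx.
- by have := kH_gt0 p; rewrite /= Ha ltxx.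
- by have := kH_gt0 p; rewrite /= Ha ltxx.
Qed.

Lemma kd_sym a b : kd a b = kd b a.
Proof. by rewrite /kd eq_sym; case: ifP => // _; rewrite mdC; lra. Qed.

Lemma kd_tri b a c : kd a c <= kd a b + kd b c.
Proof.
rewrite /kd; case: (eqVneq a c) => [->|ac].
  by case: ifP => _; case: ifP => _;
    rewrite ?addr0 ?add0r ?lexx // ?addr_ge0 ?mdist_ge0 ?kH_ge0.
case: (eqVneq a b) => [<-|ab]; first by rewrite (negbTE ac) add0r.
case: (eqVneq b c) => [->|bc]; first by rewrite ?eqxx ?(negbTE ac) addr0.
have := metric_triangle (kbase a) (kbase b) (kbase c).
have := kH_ge0 b; lra.
Qed.

HB.instance Definition _ := isMetric.Build R (KT y) kd_xx kd_pos kd_sym kd_tri.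

Lemma mdE (a b : KT y) : mdist a b = kd a b.
Proof. by []. Qed.

End KC.


Section P1.
Context {R : realType} (X : metricType R) (y : nat -> X).
Hypothesis Hy : forall x (eps : R), 0 < eps -> exists k, mdist x (y k) < eps.
Hypothesis hX : compact [set: X].

Local Notation K := (KT y).
Let e : X -> K := inl.

Lemma kd_le (a b : K) : mdist (kbase a) (kbase b) <= mdist a b.
Proof.
rewrite mdE /kd; case: (eqVneq a b) => [->|_]; first by rewrite mdistxx.
by have := kH_ge0 a; have := kH_ge0 b; lra.
Qed.

Lemma kd_ub (a b : K) : mdist a b <= mdist (kbase a) (kbase b) + kH a + kH b.
Proof.
rewrite mdE /kd; case: (eqVneq a b) => [->|_] //.
by have := kH_ge0 b; have := kH_ge0 b; have := mdist_ge0 (kbase b) (kbase b); lra.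
Qed.

Lemma kd_inl x x' : mdist (e x) (e x') = mdist x x'.
Proof.
rewrite mdE /kd /e; case: (eqVneq (inl x : K) (inl x')) => [[->]|_] /=.
  by rewrite mdistxx.
by rewrite !addr0.
Qed.

Lemma kd_inr p (b : K) : mdist (inr p : K) b < kH (inr p : K) -> b = inr p.
Proof.
rewrite mdE /kd; case: (eqVneq (inr p : K) b) => [//|_].
have := kH_ge0 b; have := mdist_ge0 (kbase (inr p : K)) (kbase b); move=> h1 h2 h3; exfalso; lra.
Qed.

Lemma kbase_cont : continuous (@kbase _ _ y).
Proof.
apply: cont_md => a eps e0; exists eps => // b ab.
exact: le_lt_trans (kd_le a b) ab.
Qed.

Lemma e_cont : continuous e.
Proof.
by apply: cont_md => a eps e0; exists eps => // b; rewrite kd_inl.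
Qed.

Lemma K_finT (eps : R) : 0 < eps -> finite_set [set a : K | eps <= kH a].
Proof.
move=> e0; have [N HN] := exists_N e0.
apply: (sub_finite_set _ (finite_image (fun p => (inr p : K))
   (finite_setX (finite_II N.+1) (finite_II N.+1)))).
case=> [x|[k m]] /=; first by move=> H; have := lt_le_trans e0 H; rewrite ltxx.
move=> H; exists (k, m) => //.
have : (k + m).+1%:R^-1 > N.+1%:R^-1 :> R by apply: lt_le_trans H.
rewrite ltf_pV2 ?posrE ?ltr0n // ltr_nat ltnS => km.
split => /=; rewrite /= ?mksetE; lia.
Qed.


Lemma K_compact : compact [set: K].
Proof.
move=> F PF _.
have [Hall|] := pselect (forall eps : R, 0 < eps -> F [set a : K | kH a < eps]).
  have [x [_ cx]] := hX (fmap_proper_filter (@kbase _ _ y) PF) filterT.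
  exists (inl x); split => //.
  move=> A B FA /nbhs_md [eps e0 HB].
  have e20 : 0 < eps / 2 by rewrite divr_gt0.
  have FG : F (A `&` [set a : K | kH a < eps / 2]) by apply: filterI => //; apply: Hall.
  have F1 : (@kbase _ _ y @ F) (@kbase _ _ y @` (A `&` [set a : K | kH a < eps / 2])).
    have F1' : F [set a : K | (@kbase _ _ y @` (A `&` [set a : K | kH a < eps / 2])) (kbase a)].
      by apply: filterS FG => a Ga; exists a.
    exact: F1'.
  have N1 : nbhs x [set z | mdist x z < eps / 2].
    by apply/nbhs_md; exists (eps / 2).
  have := cx _ _ F1 N1.
  move=> [z [[a [Aa Ha] Ez] xz]]; subst z; exists a; split => //; apply: HB.
  have := kd_ub (inl x : K) a; rewrite /=.
  have Ha' : kH a < eps / 2 := Ha. have xz' : mdist x (kbase a) < eps / 2 := xz.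
  by have := kH_ge0 a; lra.
move=> /existsNP [eps /not_implyP [e0 nF]].
set T := [set a : K | eps <= kH a].
have meetT A : F A -> exists2 a, T a & A a.
  move=> FA; apply: contra_notP nF => nT; apply: filterS FA => a Aa.
  rewrite /= ltNge; apply/negP => Ta; apply: nT; by exists a.
pose G := within T F.
have FG : Filter G by apply: within_filter.
have PG : ProperFilter G.
  apply: (Build_ProperFilter_ex _ FG) => P GP.
  have [a Ta Pa] := meetT _ GP; exists a; exact: Pa.
have GT : G T by apply: filterS (@filterT _ F _) => a _ Ta.
have [t [Tt ct]] := finite_compact (K_finT e0) PG GT.
exists t; split => // A B FA nB; apply: ct nB.
by apply: filterS FA => a Aa _.
Qed.


Lemma P_inr (a : K) : ~ range e a -> exists p, a = inr p.
Proof. by case: a => [x|p] H; [exfalso; apply: H; exists x|exists p]. Qed.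

Lemma inr_P p : ~ range e (inr p : K).
Proof. by move=> [x _]. Qed.

Lemma K_pe : peripheral_extension e.
Proof.
split; first exact: K_compact.
split.
  split; first exact: e_cont.
  split; first by move=> x x' [].
  move=> U oU; exists (@kbase _ _ y @^-1` U); split.
    exact: (proj1 (continuousP _) kbase_cont U oU).
  apply/seteqP; split.
    by move=> _ [x Ux <-]; split => //; exists x.
  by move=> a [Va [x _ Ex]]; subst a; exists x.
split.
  apply/open_md => a /P_inr [p ->]; exists (kH (inr p : K)); first exact: kH_gt0.
  by move=> b /kd_inr ->; apply: inr_P.
split.
  apply/seteqP; split => // a _.
  case: a => [x|p]; last by apply: subset_closure; apply: inr_P.
  move=> B /nbhs_md [eps e0 HB].
  have e20 : 0 < eps / 2 by rewrite divr_gt0.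
  have [k Hk] := Hy x e20.
  have [N HN] := exists_N e20.
  exists (inr (k, N)); split; first exact: inr_P.
  apply: HB; apply: le_lt_trans (kd_ub _ _) _.
  have h1 : kH (inr (k, N) : K) <= N.+1%:R^-1 :> R.
    by rewrite /kH /= lef_pV2 ?posrE ?ltr0n // ler_nat ltnS leq_addl.
  have h2 : kH (inl x : K) = 0 by [].
  have h3 : kbase (inl x : K) = x by [].
  have h4 : kbase (inr (k, N) : K) = y k by [].
  rewrite h2 h3 h4 addr0; apply: lt_le_trans (ltrD Hk (le_lt_trans h1 HN)) _.
  by rewrite -splitr.
split.
  apply/countable_injP.
  exists (fun a : K => if a is inr p then choice.pickle p else 0%N).
  move=> a b; rewrite !inE => /P_inr [p ->] /P_inr [q ->] /= pq.
  by rewrite (pcan_inj choice.pickleK pq).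
split.
  move=> fP; apply: infinite_nat.
  have := finite_image (fun a : K => if a is inr p then p.1 else 0%N) fP.
  apply: sub_finite_set => n _; exists (inr (n, 0%N)) => //; exact: inr_P.
move=> p /[dup] Pp /P_inr [q Eq]; split; first by rewrite inE.
exists [set b | mdist p b < kH (inr q : K)].
  by apply/nbhs_md; exists (kH (inr q : K)) => //; exact: kH_gt0.
apply/seteqP; split.
  by move=> b [] /=; rewrite Eq => /kd_inr ->.
by move=> b /= ->; split => //; rewrite mdistxx invr_gt0 ltr0n //.
Qed.

End P1.

Lemma part1 {R : realType} (X : metricType R) (hX : compact [set: X]) :
  [set: X] !=set0 -> exists (K : metricType R) (e : X -> K), peripheral_extension e.
Proof.
move=> X0; have [y Hy] := dense_seq hX X0.
by exists (KT y), inl; apply: K_pe.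
Qed.

End Aux.

Theorem lemma1p1 (R : realType) (X : metricType R) (hX : compact [set: X]) :
  ([set: X] !=set0 -> exists (K : metricType R) (e : X -> K), peripheral_extension e) /\
  ([set: X] !=set0 -> forall (K1 K2 : metricType R) (e1 : X -> K1) (e2 : X -> K2),
      peripheral_extension e1 -> peripheral_extension e2 ->
      exists h : K1 -> K2, homeomorphism h /\ forall x, h (e1 x) = e2 x) /\
  (forall (K : metricType R) (e : X -> K), peripheral_extension e ->
      forall p q : K, ~ range e p -> ~ range e q ->
      exists h : K -> K, [/\ homeomorphism h, forall x, h (e x) = e x & h p = q]).
Proof.
split; first exact: Aux.part1.
split; first exact: Aux.part2.
exact: Aux.part3.
Qed.
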